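(* Let $\sigma>0$, $\alpha>0$, $\eta>0$ and define the penalty $p(t)=(\alpha+1)\log(\sigma\eta+t)$ for $t\ge 0$. For $\hat\beta\in\mathbb{R}$ consider the penalized least squares problem $$\tilde\beta(\hat\beta)=\arg\min_{\beta\in\mathbb{R}}\left\{\tfrac12(\hat\beta-\beta)^2+\sigma^{2}p(|\beta|)\right\}.$$ If $\eta<2\sqrt{\alpha+1}$, then the resulting estimator is a thresholding rule: there exists $c>0$ such that for every $\hat\beta$ with $|\hat\beta|<c$ the minimizer is $\tilde\beta(\hat\beta)=0$.
   Context: This penalty is the part of $-\log\pi(\beta\mid\sigma)$ depending on $\beta$ under the generalized double Pareto prior $\beta\mid\sigma\sim\mathrm{GDP}(\xi=\sigma\eta/\alpha,\alpha)$, whose density is $\frac{1}{2\xi}(1+|\beta|/(\alpha\xi))^{-(\alpha+1)}$; the problem corresponds to a single coordinate of penalized least squares with an orthonormal design, where $\hat\beta=\mathbf{x}_j'\mathbf{y}$. *)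

(* Defs.v *)
From Stdlib Require Import Reals.
Open Scope R_scope.

Definition gdp_pen (sigma alpha eta t : R) : R :=
  (alpha + 1) * ln (sigma * eta + t).

Definition gdp_obj (sigma alpha eta bhat beta : R) : R :=
  / 2 * (bhat - beta) ^ 2 + sigma ^ 2 * gdp_pen sigma alpha eta (Rabs beta).

Definition is_unique_argmin (f : R -> R) (b : R) : Prop :=
  forall beta, beta <> b -> f b < f beta.

(* Main.v *)
Require Import Defs.
From Stdlib Require Import Reals Lra Psatz.
Open Scope R_scope.

Lemma ln_diff_lb k t : 0 < k -> 0 < t -> t / (k + t) <= ln (k + t) - ln k.
Proof.
  intros hk ht.
  set (rr := ln k - ln (k + t)).
  assert (E : exp rr = k / (k + t)).
  { unfold rr, Rminus. rewrite exp_plus, exp_Ropp, !exp_ln by lra. reflexivity. }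
  assert (H := exp_ineq1_le rr). rewrite E in H.
  assert (t / (k + t) = 1 - k / (k + t)) by (field; lra).
  unfold rr in H. lra.
Qed.

Theorem proposition3 (sigma alpha eta : R) :
  0 < sigma -> 0 < alpha -> 0 < eta -> eta < 2 * sqrt (alpha + 1) ->
  exists c : R, 0 < c /\
    forall bhat : R, Rabs bhat < c ->
      is_unique_argmin (gdp_obj sigma alpha eta bhat) 0.
Proof.
  intros hs ha he heta.
  set (q := sqrt (alpha + 1)).
  assert (hq2 : q * q = alpha + 1) by (apply sqrt_sqrt; lra).
  exists (sigma * q - sigma * eta / 2). split.
  { assert (sigma * eta < sigma * (2 * q)) by (apply Rmult_lt_compat_l; [exact hs | exact heta]). nra. }
  intros bhat hb beta hne.
  unfold gdp_obj, gdp_pen.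
  rewrite Rabs_R0, Rplus_0_r.
  set (k := sigma * eta). set (t := Rabs beta).
  assert (hk : 0 < k) by (unfold k; nra).
  assert (ht : 0 < t) by (unfold t; apply Rabs_pos_lt; auto).
  assert (L := ln_diff_lb k t hk ht).
  assert (hb2 : beta ^ 2 = t ^ 2) by (unfold t; rewrite pow2_abs; reflexivity).
  assert (hbb : - (bhat * beta) >= - (Rabs bhat * t)).
  { unfold t. rewrite <- Rabs_mult. pose proof (Rle_abs (bhat*beta)). lra. }
  assert (Hq : t / 2 + sigma^2 * q * q / (k + t) >= sigma * q - k / 2).
  { apply Rle_ge.
    apply (Rmult_le_reg_r (k + t)); [lra|].
    replace ((t / 2 + sigma ^ 2 * q * q / (k + t)) * (k + t))
      with (t/2 * (k+t) + sigma^2*q*q) by (field; lra).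
    pose proof (pow2_ge_0 (k + t - sigma * q)). pose proof (pow2_ge_0 (sigma*q)). nra. }
  assert (Hq' : t / (k + t) * (sigma^2 * (alpha + 1)) = t * (sigma^2*q*q/(k+t))).
  { rewrite <- hq2. field. lra. }
  assert (Hm : sigma ^ 2 * (alpha + 1) * (t / (k + t))
             <= sigma ^ 2 * ((alpha + 1) * (ln (k + t) - ln k))).
  { rewrite <- Rmult_assoc. apply Rmult_le_compat_l; [nra|exact L]. }
  assert (Hc : t * (t/2 + sigma^2*q*q/(k+t)) >= t * (sigma * q - k/2)) by nra.
  replace (/ 2 * (bhat - beta) ^ 2) with (/2 * bhat^2 - bhat*beta + /2 * beta^2) by field.
  replace (/ 2 * (bhat - 0) ^ 2) with (/2 * bhat^2) by field.
  rewrite hb2.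
  assert (Hlog : sigma ^ 2 * ((alpha + 1) * ln (k + t))
     = sigma ^ 2 * ((alpha + 1) * ln k) + sigma ^ 2 * ((alpha + 1) * (ln (k + t) - ln k))) by ring.
  rewrite Hlog.
  assert (Rabs bhat * t < (sigma * q - k / 2) * t) by (apply Rmult_lt_compat_r; [exact ht | exact hb]).
  nra.
Qed.
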